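(* Let $G$ be the $n$-cycle graph and let $\sigma$ be a $d$-dimensional signature on $G$. Then there exist $d_1,d_{-1}\in\mathbb{N}$ and $\theta_1,\dots,\theta_k\in(0,\pi)\cup(\pi,2\pi)$ with $d_1+d_{-1}+2k=d$ such that $$\sigma\cong\Big(\bigoplus_{i=1}^{d_1}\iota^1\Big)\oplus\Big(\bigoplus_{i=1}^{d_{-1}}\iota^{-1}\Big)\oplus\sigma^{\theta_1}\oplus\cdots\oplus\sigma^{\theta_k}.$$
   Context: The $n$-cycle graph has vertices $1,\dots,n$ and edges $\{i,i+1\}$ for $i=1,\dots,n$ (indices mod $n$), with positive weights. A $d$-dimensional signature is a map $\sigma$ from oriented edges to $\mathsf{O}(d)$ with $\sigma_{ji}=\sigma_{ij}^{\mathrm T}$. Two $d$-dimensional signatures satisfy $\sigma\cong\tau$ if there is $f:V\to\mathsf{O}(d)$ with $f(i)\sigma_{ij}=\tau_{ij}f(j)$ for every oriented edge $(i,j)$. The direct sum of signatures is the edgewise block-diagonal sum $(\sigma\oplus\sigma')_{ij}=\sigma_{ij}\oplus\sigma'_{ij}$. $\iota^1$ is the $1$-dimensional signature identically $1$; $\iota^{-1}$ is the $1$-dimensional signature with value $-1$ on the oriented edges $(1,2),(2,1)$ and $+1$ elsewhere. For $\theta\in\mathbb{R}$, $\sigma^\theta$ is the $2$-dimensional signature with $\sigma^\theta_{12}=\begin{bmatrix}\cos\theta&-\sin\theta\\ \sin\theta&\cos\theta\end{bmatrix}$ and $\sigma^\theta_{i,i+1}=I_2$ for $i=2,\dots,n$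 (with $\sigma^\theta_{ji}=(\sigma^\theta_{ij})^{\mathrm T}$). $\mathbb{N}$ includes $0$. *)

(* Defs.v *)
From mathcomp Require Import all_boot all_order all_algebra.
From mathcomp Require Import reals trigo.
Set Implicit Arguments. Unset Strict Implicit. Unset Printing Implicit Defensive.
Import Order.TTheory GRing.Theory Num.Theory.
Local Open Scope ring_scope.

Section Signatures.
Variable R : realType.
Variable n : nat.

(* Vertices 1..n of the paper are 'I_n (vertex k of the paper is k-1 here).
   Oriented edges of the n-cycle: (i, i+1 mod n) and (i+1 mod n, i). *)
Definition cyc_edge (i j : 'I_n) : bool :=
  (val j == (val i).+1 %% n)%N || (val i == (val j).+1 %% n)%N.

Definition orthogonal (d : nat) (Q : 'M[R]_d) : Prop := Q *m Q^T = 1%:M.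

(* A d-dimensional "pre-signature": a matrix for each ordered pair of vertices
   (only values on oriented edges matter). *)
Definition sig (d : nat) := 'I_n -> 'I_n -> 'M[R]_d.

Definition is_signature (d : nat) (sigma : sig d) : Prop :=
  forall i j, cyc_edge i j -> orthogonal (sigma i j) /\ sigma j i = (sigma i j)^T.

Definition sig_equiv (d : nat) (sigma tau : sig d) : Prop :=
  exists f : 'I_n -> 'M[R]_d,
    (forall i, orthogonal (f i)) /\
    (forall i j, cyc_edge i j -> f i *m sigma i j = tau i j *m f j).

Definition sig_dsum (d1 d2 : nat) (s : sig d1) (t : sig d2) : sig (d1 + d2) :=
  fun i j => block_mx (s i j) 0 0 (t i j).

Definition sig_empty : sig 0 := fun _ _ => 1%:M.

Definition iota_p : sig 1 := fun _ _ => 1%:M.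
(* iota^{-1}: -1 on the oriented edges (1,2),(2,1) of the paper, i.e. (0,1),(1,0). *)
Definition iota_m : sig 1 := fun i j =>
  if ((val i == 0%N) && (val j == 1%N)) || ((val i == 1%N) && (val j == 0%N))
  then (-1)%:M else 1%:M.

Definition rot (th : R) : 'M[R]_2 :=
  \matrix_(a < 2, b < 2)
    (if (val a == 0%N) && (val b == 0%N) then cos th
     else if (val a == 0%N) then - sin th
     else if (val b == 0%N) then sin th else cos th).

Definition sig_rot (th : R) : sig 2 := fun i j =>
  if (val i == 0%N) && (val j == 1%N) then rot th
  else if (val i == 1%N) && (val j == 0%N) then (rot th)^T
  else 1%:M.

Fixpoint sig_pow (s : sig 1) (m : nat) : sig m :=
  match m return sig m with
  | 0 => sig_empty
  | m'.+1 => sig_dsum s (sig_pow s m')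
  end.

Fixpoint sig_rots (l : seq R) : sig (size l * 2) :=
  match l return sig (size l * 2) with
  | [::] => sig_empty
  | th :: l' => sig_dsum (sig_rot th) (sig_rots l')
  end.

Definition sig_normal_form (d1 dm : nat) (l : seq R) : sig (d1 + dm + size l * 2) :=
  sig_dsum (sig_dsum (sig_pow iota_p d1) (sig_pow iota_m dm)) (sig_rots l).

Definition sig_cast (d d' : nat) (e : d = d') (s : sig d) : sig d' :=
  fun i j => castmx (e, e) (s i j).

End Signatures.

(* Main.v *)
Require Import Defs.
From mathcomp Require Import all_boot all_order all_algebra.
From mathcomp Require Import reals trigo.
From mathcomp Require Import ring lra zify.
From mathcomp Require Import complex.
Import Order.TTheory GRing.Theory Num.Theory.
Set Implicit Arguments. Unset Strict Implicit. Unset Printing Implicit Defensive.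
Local Open Scope ring_scope.

Section Osim.
Variable R : realType.

Definition osim m n (A : 'M[R]_m) (B : 'M[R]_n) :=
  exists P : 'M[R]_(n, m), P *m P^T = 1%:M /\ P^T *m P = 1%:M /\ P *m A = B *m P.

Lemma osim_refl m (A : 'M[R]_m) : osim A A.
Proof. by exists 1%:M; rewrite trmx1 !mulmx1 mul1mx. Qed.

Lemma osim_sym m n (A : 'M[R]_m) (B : 'M[R]_n) : osim A B -> osim B A.
Proof.
case=> P [h1 [h2 h3]]; exists P^T; rewrite trmxK; split => //; split => //.
symmetry; rewrite -[A *m _]mul1mx -h2 -mulmxA (mulmxA P) h3.
by rewrite -(mulmxA B) h1 mulmx1.
Qed.

Lemma osim_trans m n p (A : 'M[R]_m) (B : 'M[R]_n) (C : 'M[R]_p) :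
  osim A B -> osim B C -> osim A C.
Proof.
case=> P [h1 [h2 h3]] [Q [k1 [k2 k3]]]; exists (Q *m P); rewrite trmx_mul.
split; first by rewrite mulmxA -(mulmxA Q) h1 mulmx1 k1.
split; first by rewrite mulmxA -(mulmxA P^T) k2 mulmx1 h2.
by rewrite -mulmxA h3 !mulmxA k3.
Qed.

Lemma osim_block m1 m2 n1 n2 (A : 'M[R]_m1) (A' : 'M[R]_n1) (B : 'M[R]_m2) (B' : 'M[R]_n2) :
  osim A A' -> osim B B' -> osim (block_mx A 0 0 B) (block_mx A' 0 0 B').
Proof.
case=> P [h1 [h2 h3]] [Q [k1 [k2 k3]]]; exists (block_mx P 0 0 Q).
rewrite tr_block_mx !trmx0 !mulmx_block !mulmx0 !mul0mx !addr0 !add0r h1 h2 k1 k2 h3 k3.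
by rewrite -!scalar_mx_block.
Qed.

Lemma osim_swap m n (A : 'M[R]_m) (B : 'M[R]_n) :
  osim (block_mx A 0 0 B) (block_mx B 0 0 A).
Proof.
exists (block_mx 0 1%:M 1%:M 0).
rewrite tr_block_mx !trmx0 !trmx1 !mulmx_block !mulmx0 !mul0mx !addr0 !add0r !mulmx1 !mul1mx.
by rewrite -!scalar_mx_block.
Qed.

Lemma osim_cast m n (e : m = n) (A : 'M[R]_m) : osim A (castmx (e, e) A).
Proof. by case: n / e; rewrite castmx_id; apply: osim_refl. Qed.

Lemma osim_assoc m1 m2 m3 (A : 'M[R]_m1) (B : 'M[R]_m2) (C : 'M[R]_m3) :
  osim (block_mx (block_mx A 0 0 B) 0 0 C) (block_mx A 0 0 (block_mx B 0 0 C)).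
Proof.
have := block_mxAx A 0 0 0 B 0 0 0 C; rewrite /= !row_mx0 !col_mx0 => ->.
exact: osim_cast.
Qed.

Lemma osim_orth m n (A : 'M[R]_m) (B : 'M[R]_n) : osim A B -> A *m A^T = 1%:M -> B *m B^T = 1%:M.
Proof.
case=> P [h1 [h2 h3]] hA.
have hB : B = P *m A *m P^T by rewrite h3 -mulmxA h1 mulmx1.
by rewrite hB !trmx_mul trmxK !mulmxA -(mulmxA _ P^T) h2 mulmx1 -(mulmxA _ A) hA mulmx1 h1.
Qed.

End Osim.
Section Vec.
Variable R : realType.

Definition nrm n (w : 'rV[R]_n) := (w *m w^T) 0 0.

Lemma nrmE n (w : 'rV[R]_n) : w *m w^T = (nrm w)%:M.
Proof. exact: mx11_scalar. Qed.

Lemma nrm_sum n (w : 'rV[R]_n) : nrm w = \sum_j w 0 j ^+ 2.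
Proof. by rewrite /nrm mxE; apply: eq_bigr => j _; rewrite mxE expr2. Qed.

Lemma nrm_gt0 n (w : 'rV[R]_n) : w != 0 -> 0 < nrm w.
Proof.
move=> wn0; rewrite lt_def nrm_sum sumr_ge0 ?andbT; last by move=> j _; rewrite sqr_ge0.
apply: contra wn0 => /eqP /psumr_eq0P h; apply/eqP/matrixP => i j.
rewrite (ord1 i) mxE; apply/eqP; rewrite -sqrf_eq0; apply/eqP; apply: h => // k _.
exact: sqr_ge0.
Qed.

Definition unitv n (w : 'rV[R]_n) := (Num.sqrt (nrm w))^-1 *: w.

Lemma unitvE n (w : 'rV[R]_n) : w != 0 -> unitv w *m (unitv w)^T = 1%:M.
Proof.
move=> wn0; have hp := nrm_gt0 wn0.
rewrite /unitv linearZ /= -scalemxAl -scalemxAr scalerA nrmE scale_scalar_mx.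
rewrite -expr2 exprVn sqr_sqrtr ?ltW // mulVf ?scale1r //; exact: lt0r_neq0.
Qed.

Lemma unitv_scale n (w : 'rV[R]_n) : w != 0 -> w = Num.sqrt (nrm w) *: unitv w.
Proof.
move=> wn0; have hp := nrm_gt0 wn0; rewrite /unitv scalerA mulfV ?scale1r //.
by rewrite gt_eqF // sqrtr_gt0.
Qed.

Lemma scalar_mxB n (a b : R) : (a - b)%:M = a%:M - b%:M :> 'M_n.
Proof. by apply/matrixP=> i j; rewrite !mxE mulrnBl. Qed.
Lemma scalar_mxD n (a b : R) : (a + b)%:M = a%:M + b%:M :> 'M_n.
Proof. by apply/matrixP=> i j; rewrite !mxE mulrnDl. Qed.

Definition e1 m : 'rV[R]_(1 + m) := row_mx 1%:M 0.

Lemma e1E m : e1 m *m (e1 m)^T = 1%:M.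
Proof. by rewrite /e1 tr_row_mx mul_row_col trmx0 mulmx0 addr0 trmx1 mulmx1. Qed.

Lemma householder m (u : 'rV[R]_(1 + m)) : u *m u^T = 1%:M ->
  exists H : 'M[R]_(1 + m), H *m H^T = 1%:M /\ u *m H = e1 m.
Proof.
move=> hu; have [->|une] := eqVneq u (e1 m).
  by exists 1%:M; split; rewrite ?trmx1 ?mulmx1.
set e := e1 m in une *; set v := u - e.
have vn0 : v != 0 by rewrite subr_eq0.
set c := (u *m e^T) 0 0.
have hue : u *m e^T = c%:M by exact: mx11_scalar.
have heu : e *m u^T = c%:M by rewrite -[c%:M]tr_scalar_mx -hue trmx_mul trmxK.
have hv : v *m v^T = (2 - 2 * c)%:M.
  rewrite /v linearB /= mulmxBl !mulmxBr hu hue heu e1E.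
  by rewrite -!scalar_mxB; congr (_%:M); ring.
have huv : u *m v^T = (1 - c)%:M.
  by rewrite /v linearB /= mulmxBr hu hue -scalar_mxB.
set s := 2 - 2 * c.
have sp : 0 < s by have := nrm_gt0 vn0; rewrite /nrm hv mxE eqxx mulr1n.
have s1 : 1 - c = s / 2 by rewrite /s; field.
set k := 2 / s.
set V := v^T *m v.
have hVt : V^T = V by rewrite /V trmx_mul trmxK.
have hVV : V *m V = s *: V.
  by rewrite /V mulmxA -(mulmxA v^T) hv mul_mx_scalar -scalemxAl.
have hHt : (1%:M - k *: V)^T = 1%:M - k *: V.
  by rewrite linearB /= linearZ /= trmx1 hVt.
exists (1%:M - k *: V); split.
  rewrite hHt mulmxBl !mulmxBr mul1mx mulmx1 -!scalemxAl -!scalemxAr scalerA hVV scalerA.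
  rewrite mul1mx -scalerBl -addrA -scaleNr -scalerBl.
  have -> : - k - (k - k * k * s) = 0 by rewrite /k; field; rewrite gt_eqF.
  by rewrite scale0r addr0.
rewrite mulmxBr mulmx1 -scalemxAr mulmxA huv mul_scalar_mx scalerA s1.
have -> : k * (s / 2) = 1 by rewrite /k; field; rewrite gt_eqF.
by rewrite scale1r /v opprB addrC subrK.
Qed.

End Vec.

Section Split.
Variable R : realType.

Lemma blk_orth k m (A : 'M[R]_k) (C : 'M[R]_(m,k)) (D : 'M[R]_m) :
  block_mx A 0 C D *m (block_mx A 0 C D)^T = 1%:M ->
  [/\ C = 0, A *m A^T = 1%:M & D *m D^T = 1%:M].
Proof.
rewrite tr_block_mx trmx0 mulmx_block !mulmx0 !mul0mx !addr0.
rewrite [1%:M]scalar_mx_block => /eq_block_mx [hA hAC _ hD].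
have hA' : A^T *m A = 1%:M by apply: mulmx1C.
have hC : C = 0.
  apply: trmx_inj; rewrite trmx0 -[C^T]mul1mx -hA' -mulmxA hAC mulmx0 //.
by move: hD; rewrite hC mul0mx add0r.
Qed.

Lemma usub1 k m : usubmx (1%:M : 'M[R]_(k + m)) = row_mx 1%:M 0.
Proof. by rewrite [1%:M]scalar_mx_block block_mxEv col_mxKu. Qed.

Lemma split_Q k d' (M Q : 'M[R]_(k + d')) : M *m M^T = 1%:M -> Q *m Q^T = 1%:M ->
  (usubmx Q *m M <= usubmx Q)%MS ->
  exists (A : 'M[R]_k) (B : 'M[R]_d'), osim M (block_mx A 0 0 B).
Proof.
move=> hM hQ /submxP [D hD].
have hQ' : Q^T *m Q = 1%:M by apply: mulmx1C.
set M1 := Q *m M *m Q^T.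
have hs : osim M M1.
  exists Q; split => //; split => //.
  by rewrite /M1 -mulmxA hQ' mulmx1.
have hur : ursubmx M1 = 0.
  rewrite /ursubmx /M1 -!mul_usub_mx hD -mulmxA mul_usub_mx hQ usub1.
  by rewrite mul_mx_row mulmx0 row_mxKr.
have hM1 : M1 *m M1^T = 1%:M by apply: (osim_orth hs).
move: hs hM1; rewrite -(submxK M1) hur => hs /blk_orth [hC _ _].
by move: hs; rewrite hC => hs; exists (ulsubmx M1), (drsubmx M1).
Qed.

Lemma E2E m : (col_mx (row_mx 1%:M 0) (row_mx 0 (row_mx 1%:M 0)) : 'M[R]_(1+1, 1+(1+m)))
   = usubmx (1%:M : 'M[R]_(2+m)).
Proof.
apply/matrixP => i j; rewrite !mxE -val_eqE /=.
case: (splitP i) => i' hi; rewrite mxE; case: (splitP j) => j' hj; rewrite ?mxE.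
- by rewrite (ord1 i') (ord1 j') /= in hi hj *; rewrite hi hj.
- by rewrite hi hj (ord1 i') add1n.
- by rewrite hi hj (ord1 i') (ord1 j').
- case: (splitP j') => j'' hj'; rewrite ?mxE.
  + by rewrite (ord1 i') (ord1 j'') /= in hi hj' *; rewrite hi hj hj'.
  + by rewrite hi hj hj' (ord1 i').
Qed.

Lemma split1 m (M : 'M[R]_(1 + m)) (x : 'rV[R]_(1 + m)) : M *m M^T = 1%:M ->
  x *m x^T = 1%:M -> (x *m M <= x)%MS ->
  exists (A : 'M[R]_1) (B : 'M[R]_m), osim M (block_mx A 0 0 B).
Proof.
move=> hM hx hinv; have [H [hH hxH]] := householder hx.
apply: (@split_Q 1 m M H^T hM); first by rewrite trmxK; apply: mulmx1C.
suff -> : usubmx H^T = x by [].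
rewrite -[H^T]mul1mx -mul_usub_mx usub1 -/(e1 R m) -hxH -mulmxA hH mulmx1 //.
Qed.

Lemma split2 m (M : 'M[R]_(2 + m)) (x y : 'rV[R]_(2 + m)) : M *m M^T = 1%:M ->
  col_mx x y *m (col_mx x y)^T = 1%:M -> (col_mx x y *m M <= col_mx x y)%MS ->
  exists (A : 'M[R]_2) (B : 'M[R]_m), osim M (block_mx A 0 0 B).
Proof.
move=> hM hX hinv.
move: (hX); rewrite tr_col_mx mul_col_row [1%:M]scalar_mx_block.
move=> /eq_block_mx [hx _ hyx hy].
have [H1 [hH1 hxH1]] := householder (hx : (x : 'rV[R]_(1 + (1 + m))) *m x^T = 1%:M).
set y1 : 'rV[R]_(1 + (1 + m)) := y *m H1.
have hH1' : H1^T *m H1 = 1%:M by apply: mulmx1C.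
have hl : lsubmx y1 = 0.
  have : y1 *m (e1 R (1 + m))^T = 0.
    by rewrite -hxH1 trmx_mul /y1 mulmxA -(mulmxA y) hH1 mulmx1; exact: hyx.
  by rewrite -{1}(hsubmxK y1) /e1 tr_row_mx mul_row_col trmx0 mulmx0 addr0 trmx1 mulmx1.
set z := rsubmx y1.
have hy1 : y1 = row_mx 0 z by rewrite -hl hsubmxK.
have hz : z *m z^T = 1%:M.
  have : y1 *m y1^T = 1%:M by rewrite /y1 trmx_mul mulmxA -(mulmxA y) hH1 mulmx1.
  by rewrite hy1 tr_row_mx mul_row_col mul0mx add0r.
have [H2 [hH2 hzH2]] := householder hz.
set P : 'M[R]_(1 + (1 + m)) := H1 *m block_mx 1%:M 0 0 H2.
have hP : P *m P^T = 1%:M.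
  rewrite /P trmx_mul tr_block_mx !trmx0 trmx1 mulmxA -(mulmxA H1) mulmx_block.
  rewrite !mulmx0 !mul0mx !addr0 add0r mulmx1 hH2 -scalar_mx_block mulmx1 hH1 //.
have hXP : col_mx x y *m P = usubmx (1%:M : 'M[R]_(2 + m)).
  rewrite -E2E /P mul_col_mx !mulmxA hxH1 -/y1 hy1 /e1 !mul_row_block.
  by rewrite !mulmx0 !mul0mx !mulmx1 !addr0 !add0r hzH2.
apply: (@split_Q 2 m M P^T hM); first by rewrite trmxK; apply: mulmx1C.
suff -> : usubmx (P^T : 'M[R]_(2 + m, 2 + m)) = col_mx x y by [].
have -> : usubmx (P^T : 'M[R]_(2 + m, 2 + m)) = usubmx (1%:M : 'M[R]_(2 + m)) *m P^T.
  by rewrite mul_usub_mx mul1mx.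
by rewrite -hXP -mulmxA hP mulmx1.
Qed.

Lemma sub_opp_scale m1 m2 n (al be : R) (a b : 'M[R]_(m1, n)) (T : 'M[R]_(m2, n)) :
  (a <= T)%MS -> (b <= T)%MS -> ((al *: a - be *: b)%R <= T)%MS /\ ((be *: a + al *: b)%R <= T)%MS.
Proof.
move=> ha hb; split.
  rewrite -scaleNr; exact: (addmx_sub (scalemx_sub _ ha) (scalemx_sub _ hb)).
exact: (addmx_sub (scalemx_sub _ ha) (scalemx_sub _ hb)).
Qed.

Lemma no2 (x z : 'rV[R]_1) : x *m x^T = 1%:M -> z *m x^T = 0 -> z = 0.
Proof.
move=> hx hzx; apply/matrixP => i j; rewrite (ord1 i) (ord1 j) mxE.
move/matrixP/(_ 0 0): hzx; move/matrixP/(_ 0 0): hx.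
rewrite !mxE !big_ord1 !mxE /= => hx /eqP; rewrite mulf_eq0 => /orP [/eqP //|/eqP hx0].
by move: hx; rewrite hx0 mul0r => /eqP; rewrite eq_sym oner_eq0.
Qed.

Lemma gs_step d (M : 'M[R]_d.+1) (a b : 'rV[R]_d.+1) al be : M *m M^T = 1%:M ->
  a != 0 -> a *m M = al *: a - be *: b -> b *m M = be *: a + al *: b ->
  exists k d' (A : 'M[R]_k) (B : 'M[R]_d'),
    [/\ (0 < k <= 2)%N, (k + d')%N = d.+1 & osim M (block_mx A 0 0 B)].
Proof.
move=> hM an0 haM hbM.
set T := col_mx a b.
have /andP [sa sb] : (a <= T)%MS && (b <= T)%MS by rewrite -col_mx_sub submx_refl.
have hTinv : (T *m M <= T)%MS.
  have [h1 h2] := sub_opp_scale al be sa sb.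
  by rewrite /T mul_col_mx col_mx_sub haM hbM h1 h2.
set x := unitv a.
have hx : x *m x^T = 1%:M by apply: unitvE.
have xT : (x <= T)%MS by apply: scalemx_sub.
have ax : (a <= x)%MS by rewrite (unitv_scale an0) scalemx_sub ?submx_refl.
set t := (b *m x^T) 0 0.
have hbx : b *m x^T = t%:M by apply: mx11_scalar.
set z := b - t *: x.
have hzx : z *m x^T = 0.
  by rewrite /z mulmxBl -scalemxAl hx hbx -scalemx1 subrr.
have [z0|zn0] := eqVneq z 0.
  have bx : b = t *: x by apply/eqP; rewrite -subr_eq0 -/z z0.
  have Tx : (T <= x)%MS by rewrite col_mx_sub ax bx scalemx_sub ?submx_refl.
  have [A [B hs]] := @split1 d M x hM hx
     (submx_trans (submxMr M xT) (submx_trans hTinv Tx)).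
  by exists 1%N, d, A, B.
set y := unitv z.
have hy : y *m y^T = 1%:M by apply: unitvE.
have hyx : y *m x^T = 0 by rewrite /y /unitv -scalemxAl hzx scaler0.
have hxy : x *m y^T = 0 by rewrite -[x]trmxK -trmx_mul hyx trmx0.
set X := col_mx x y.
have hX : X *m X^T = 1%:M.
  by rewrite /X tr_col_mx mul_col_row hx hy hxy hyx -scalar_mx_block.
have yT : (y <= T)%MS.
  apply: scalemx_sub; rewrite /z -scaleNr; apply: addmx_sub => //.
  exact: scalemx_sub.
have /andP [xX yX] : (x <= X)%MS && (y <= X)%MS by rewrite -col_mx_sub submx_refl.
have TX : (T <= X)%MS.
  rewrite col_mx_sub (submx_trans ax xX) /=.
  have -> : b = z + t *: x by rewrite /z subrK.
  apply: addmx_sub; last exact: scalemx_sub.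
  by rewrite (unitv_scale zn0); apply: scalemx_sub.
have XT : (X <= T)%MS by rewrite col_mx_sub xT yT.
have hXinv : (X *m M <= X)%MS.
  exact: (submx_trans (submxMr M XT) (submx_trans hTinv TX)).
case: (posnP d) => [d0|dpos].
  by exfalso; subst d; move/eqP: zn0; apply; apply: (no2 hx hzx).
have [d' hd] : exists d', d = d'.+1 by exists d.-1; rewrite prednK.
subst d.
have [A [B hs]] := @split2 d' M x y hM hX hXinv.
by exists 2%N, d', A, B.
Qed.
End Split.

Local Open Scope complex_scope.
Section Eig.
Variable R : realType.

Lemma ReD (x y : R[i]) : complex.Re (x + y) = complex.Re x + complex.Re y.
Proof. by case: x; case: y. Qed.
Lemma ImD (x y : R[i]) : complex.Im (x + y) = complex.Im x + complex.Im y.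
Proof. by case: x; case: y. Qed.
Lemma Re0 : complex.Re (0 : R[i]) = 0. Proof. by []. Qed.
Lemma Im0 : complex.Im (0 : R[i]) = 0. Proof. by []. Qed.
Lemma ReMr (z : R[i]) (r : R) : complex.Re (z * r%:C) = complex.Re z * r.
Proof. by case: z => x y /=; rewrite mulr0 subr0. Qed.
Lemma ImMr (z : R[i]) (r : R) : complex.Im (z * r%:C) = complex.Im z * r.
Proof. by case: z => x y /=; rewrite mulr0 add0r. Qed.
Lemma ReM (z w : R[i]) : complex.Re (z * w) = complex.Re z * complex.Re w - complex.Im z * complex.Im w.
Proof. by case: z => x y; case: w. Qed.
Lemma ImM (z w : R[i]) : complex.Im (z * w) = complex.Re z * complex.Im w + complex.Im z * complex.Re w.
Proof. by case: z => x y; case: w. Qed.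

Lemma Re_sum n (F : 'I_n -> R[i]) : complex.Re (\sum_i F i) = \sum_i complex.Re (F i).
Proof. exact: (big_morph _ ReD Re0). Qed.
Lemma Im_sum n (F : 'I_n -> R[i]) : complex.Im (\sum_i F i) = \sum_i complex.Im (F i).
Proof. exact: (big_morph _ ImD Im0). Qed.

Lemma real_eig d (M : 'M[R]_d.+1) : exists a b : 'rV[R]_d.+1, (a != 0 \/ b != 0) /\
  exists al be : R, a *m M = al *: a - be *: b /\ b *m M = be *: a + al *: b.
Proof.
pose MC := map_mx (real_complex R) M.
have : size (char_poly MC) != 1%N by rewrite size_char_poly.
move=> /closed_rootP [la rla].
have : eigenvalue MC la by rewrite eigenvalue_root_char.
move=> /eigenvalueP [v hv vn0].
exists (map_mx (@complex.Re R) v), (map_mx (@complex.Im R) v); split.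
  apply/orP; rewrite -negb_and; apply: contra vn0 => /andP [/eqP ha /eqP hb].
  apply/eqP/matrixP => i j; move/matrixP/(_ i j): ha; move/matrixP/(_ i j): hb.
  by rewrite !mxE; case: (v i j) => x y /= -> ->.
exists (complex.Re la), (complex.Im la); split; apply/matrixP => i j;
  move/matrixP/(_ i j): hv; rewrite !mxE => e.
- have := congr1 (@complex.Re R) e; rewrite Re_sum ReM => <-.
  by apply: eq_bigr => k _; rewrite !mxE ReMr.
- have := congr1 (@complex.Im R) e; rewrite Im_sum ImM addrC => <-.
  by apply: eq_bigr => k _; rewrite !mxE ImMr.
Qed.
End Eig.

Local Close Scope complex_scope.

Section Step.
Variable R : realType.

Lemma step d (M : 'M[R]_d.+1) : M *m M^T = 1%:M ->
  exists k d' (A : 'M[R]_k) (B : 'M[R]_d'),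
    [/\ (0 < k <= 2)%N, (k + d')%N = d.+1 & osim M (block_mx A 0 0 B)].
Proof.
move=> hM; have [a [b [ab [al [be [ha hb]]]]]] := real_eig M.
have [a0|an0] := eqVneq a 0; last exact: (gs_step hM an0 ha hb).
case: ab => [|bn0]; first by rewrite a0 eqxx.
apply: (gs_step (b := a) (al := al) (be := - be) hM bn0).
  by rewrite hb scaleNr opprK addrC.
by rewrite ha scaleNr addrC.
Qed.

End Step.

Section Angle.
Variable R : realType.

Lemma angle (c s : R) : c ^+ 2 + s ^+ 2 = 1 -> s != 0 ->
  exists th, [/\ cos th = c, sin th = s & (0 < th < pi) || (pi < th < 2 * pi)].
Proof.
move=> hcs sn0.
have hc : -1 <= c <= 1 by apply/andP; split; nra.
have s2 : 0 < s ^+ 2 by rewrite exprn_even_gt0.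
have c1 : -1 < c < 1 by apply/andP; split; nra.
set ph := acos c.
have hcos : cos ph = c by rewrite /ph acosK // in_itv /=.
have hsin : sin ph = `|s|.
  have e : 1 - c ^+ 2 = s ^+ 2 by lra.
  by rewrite /ph sin_acos // e sqrtr_sqr.
have ph0 : 0 < ph by apply: acos_gt0; case/andP: c1 => /ltW -> ->.
have phpi : ph < pi by apply: acos_ltpi; case/andP: c1 => -> /ltW ->.
have [sp|sn] := ltP 0 s.
  exists ph; split => //; first by rewrite hsin gtr0_norm.
  by rewrite ph0 phpi.
exists (- ph + pi *+ 2); split.
- by rewrite cosD2pi cosN.
- by rewrite sinD2pi sinN hsin ler0_norm ?opprK.
- apply/orP; right; rewrite -mulr_natl; apply/andP; split; lra.
Qed.
End Angle.

Section NF.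
Variable R : realType.

Fixpoint RM (l : seq R) : 'M[R]_(size l * 2) :=
  match l return 'M[R]_(size l * 2) with
  | [::] => 1%:M
  | th :: l' => block_mx (Defs.rot th) 0 0 (RM l')
  end.

Definition NFm d1 dm (l : seq R) :=
  block_mx (block_mx (1%:M : 'M[R]_d1) 0 0 ((-1)%:M : 'M[R]_dm)) 0 0 (RM l).

Definition good (l : seq R) := forall th, th \in l -> (0 < th < pi) || (pi < th < 2 * pi).

Lemma abs_p d1 dm l : osim (block_mx (1%:M : 'M[R]_1) 0 0 (NFm d1 dm l)) (NFm (1 + d1) dm l).
Proof.
apply: osim_trans; first exact/osim_sym/osim_assoc.
apply: osim_block; last exact: osim_refl.
apply: osim_trans; first exact/osim_sym/osim_assoc.
rewrite -scalar_mx_block; exact: osim_refl.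
Qed.

Lemma abs_m d1 dm l : osim (block_mx ((-1)%:M : 'M[R]_1) 0 0 (NFm d1 dm l)) (NFm d1 (dm + 1) l).
Proof.
apply: osim_trans; first exact/osim_sym/osim_assoc.
apply: osim_block; last exact: osim_refl.
apply: osim_trans; first exact: osim_swap.
apply: osim_trans; first exact: osim_assoc.
rewrite -scalar_mx_block; exact: osim_refl.
Qed.

Lemma abs_r th d1 dm l : osim (block_mx (Defs.rot th) 0 0 (NFm d1 dm l)) (NFm d1 dm (th :: l)).
Proof.
apply: osim_trans; first exact/osim_sym/osim_assoc.
apply: osim_trans.
  apply: osim_block; last exact: osim_refl.
  exact: osim_swap.
exact: osim_assoc.
Qed.

Definition i0 : 'I_2 := ord0.
Definition i1 : 'I_2 := ord_max.

Lemma mx2_eq (A B : 'M[R]_2) : A i0 i0 = B i0 i0 -> A i0 i1 = B i0 i1 ->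
  A i1 i0 = B i1 i0 -> A i1 i1 = B i1 i1 -> A = B.
Proof.
move=> h00 h01 h10 h11; apply/matrixP => i j.
have ei : i = i0 \/ i = i1.
  by case: i => [[|[|//]] hi]; [left|right]; apply: val_inj.
have ej : j = i0 \/ j = i1.
  by case: j => [[|[|//]] hj]; [left|right]; apply: val_inj.
by case: ei => ->; case: ej => ->.
Qed.

Lemma mul2E m p (A : 'M[R]_(m, 2)) (B : 'M[R]_(2, p)) i j :
  (A *m B) i j = A i i0 * B i0 j + A i i1 * B i1 j.
Proof.
rewrite mxE big_ord_recl big_ord1; congr (_ + _).
by have -> : lift ord0 ord0 = i1 :> 'I_2 by apply: val_inj.
Qed.

Lemma absorb1 (a : 'M[R]_1) : a *m a^T = 1%:M -> forall d1 dm l, good l ->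
  exists d1' dm' l', [/\ good l', (d1' + dm' + size l' * 2 = 1 + (d1 + dm + size l * 2))%N
     & osim (block_mx a 0 0 (NFm d1 dm l)) (NFm d1' dm' l')].
Proof.
move=> ha d1 dm l gl.
have a2 : a 0 0 ^+ 2 = 1.
  by move/matrixP/(_ 0 0): ha; rewrite !mxE big_ord1 !mxE /= expr2.
rewrite [a]mx11_scalar; move/eqP: a2; rewrite sqrf_eq1 => /orP [/eqP ->|/eqP ->].
  by exists (1 + d1)%N, dm, l; split; [done | lia | exact: abs_p].
by exists d1, (dm + 1)%N, l; split; [done | lia | exact: abs_m].
Qed.

Lemma absorb2 (A : 'M[R]_2) : A *m A^T = 1%:M -> forall d1 dm l, good l ->
  exists d1' dm' l', [/\ good l', (d1' + dm' + size l' * 2 = 2 + (d1 + dm + size l * 2))%N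
     & osim (block_mx A 0 0 (NFm d1 dm l)) (NFm d1' dm' l')].
Proof.
move=> hA d1 dm l gl.
have hA' : A^T *m A = 1%:M by apply: mulmx1C.
set p := A i0 i0; set q := A i0 i1; set r := A i1 i0; set s := A i1 i1.
have E1 : p * p + q * q = 1 by move/matrixP/(_ i0 i0): hA; rewrite mul2E !mxE.
have E2 : p * r + q * s = 0 by move/matrixP/(_ i0 i1): hA; rewrite mul2E !mxE.
have F1 : p * p + r * r = 1 by move/matrixP/(_ i0 i0): hA'; rewrite mul2E !mxE.
have F2 : p * q + r * s = 0 by move/matrixP/(_ i0 i1): hA'; rewrite mul2E !mxE.
suff [[v [vn0 hv]]|[th [hth gth]]] : (exists v : 'rV[R]_2, v != 0 /\ (v *m A <= v)%MS) \/
   (exists th, A = Defs.rot th /\ ((0 < th < pi) || (pi < th < 2 * pi))).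
  set x := unitv v.
  have hx : x *m x^T = 1%:M by apply: unitvE.
  have hxA : (x *m (A : 'M[R]_(1 + 1)) <= x)%MS.
    have cn0 : (Num.sqrt (nrm v))^-1 != 0 by rewrite invr_eq0 gt_eqF // sqrtr_gt0 nrm_gt0.
    rewrite /x /unitv (eqmx_scale _ cn0) -scalemxAl; exact: scalemx_sub.
  have [a [b hs]] := @split1 R 1 A x hA hx hxA.
  have /blk_orth [_ ha hb] := osim_orth hs hA.
  have [d1' [dm' [l' [gl' e' hs']]]] := @absorb1 b hb d1 dm l gl.
  have [d1'' [dm'' [l'' [gl'' e'' hs'']]]] := @absorb1 a ha d1' dm' l' gl'.
  exists d1'', dm'', l''; split => //; first by rewrite e'' e'; lia.
  apply: osim_trans; first by apply: osim_block; [exact: hs | exact: osim_refl].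
  apply: osim_trans; first exact: osim_assoc.
  apply: osim_trans; last exact: hs''.
  by apply: osim_block; [exact: osim_refl | exact: hs'].
  exists d1, dm, (th :: l); split.
  - by move=> t; rewrite in_cons => /orP [/eqP ->|/gl].
  - by rewrite /= mulSn; lia.
  - by rewrite hth; apply: abs_r.
have rv2 (u w : 'rV[R]_2) : u 0 i0 = w 0 i0 -> u 0 i1 = w 0 i1 -> u = w.
  move=> h0 h1; apply/matrixP => i j; rewrite (ord1 i).
  by case: j => [[|[|//]] hj]; [rewrite (_ : Ordinal hj = i0) | rewrite (_ : Ordinal hj = i1)] => //; apply: val_inj.
have [q0|qn0] := eqVneq q 0.
  left; exists (\row_(j < 2) (j == i0)%:R); split.
    by apply/eqP => /matrixP/(_ 0 i0); rewrite !mxE eqxx => /eqP; rewrite oner_eq0.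
  have -> : (\row_(j < 2) (j == i0)%:R) *m A = p *: (\row_(j < 2) (j == i0)%:R).
    apply: rv2; rewrite mul2E !mxE /= mul1r mul0r addr0; first by rewrite mulr1.
    by rewrite mulr0 -/q q0.
  exact/scalemx_sub/submx_refl.
have : (r - q) * (r + q) = 0 by nra.
move/eqP; rewrite mulf_eq0 => /orP [/eqP rq|/eqP rq].
  have rqe : r = q by apply/eqP; rewrite -subr_eq0 rq.
  have sp : s = - p.
    have : q * (p + s) = 0 by rewrite -rqe in F2 *; nra.
    by move/eqP; rewrite mulf_eq0 (negbTE qn0) /= addrC addr_eq0 => /eqP.
  left; exists (\row_(j < 2) (if j == i0 then q else 1 - p)); split.
    by apply/eqP => /matrixP/(_ 0 i0); rewrite !mxE eqxx => h; move: qn0; rewrite h eqxx.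
  have -> : (\row_(j < 2) (if j == i0 then q else 1 - p)) *m A = (\row_(j < 2) (if j == i0 then q else 1 - p)).
    apply: rv2; rewrite mul2E !mxE /= -/p -/q -/r -/s.
      by rewrite rqe; ring.
    by rewrite sp; nra.
  exact: submx_refl.
have rqe : r = - q by apply/eqP; rewrite -addr_eq0 rq.
have sp : s = p.
  have : q * (s - p) = 0 by rewrite rqe in E2; nra.
  by move/eqP; rewrite mulf_eq0 (negbTE qn0) /= subr_eq0 => /eqP.
have h1 : p ^+ 2 + (- q) ^+ 2 = 1 by rewrite sqrrN !expr2.
have h2 : - q != 0 by rewrite oppr_eq0.
have [th [hc hs gth]] := angle h1 h2.
right; exists th; split => //.
apply: mx2_eq; rewrite !mxE /= -/p -/q -/r -/s.
- by rewrite hc.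
- by rewrite hs opprK.
- by rewrite hs rqe.
- by rewrite hc sp.
Qed.

Lemma core d (M : 'M[R]_d) : M *m M^T = 1%:M ->
  exists d1 dm l, [/\ good l, (d1 + dm + size l * 2)%N = d & osim M (NFm d1 dm l)].
Proof.
elim/ltn_ind: d M => d IH M hM.
case: d IH M hM => [|d] IH M hM.
  exists 0%N, 0%N, [::]; split => //.
  exists 0; split; [|split]; apply/matrixP => i j; [by case: i | by case: i | by case: i].
have [k [d' [A [B [hk hkd hs]]]]] := step hM.
have /blk_orth [_ hA hB] := osim_orth hs hM.
have [d1 [dm [l [gl hsz hsB]]]] := IH d' ltac:(lia) B hB.
have hs2 : osim M (block_mx A 0 0 (NFm d1 dm l)).
  apply: osim_trans hs _; apply: osim_block; [exact: osim_refl | exact: hsB].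
case: k A hk hkd hA hs hs2 => [|[|[|k]]] // A _ hkd hA _ hs2.
  have [d1' [dm' [l' [gl' e' hs']]]] := @absorb1 A hA d1 dm l gl.
  by exists d1', dm', l'; split => //; [lia | exact: osim_trans hs2 hs'].
have [d1' [dm' [l' [gl' e' hs']]]] := @absorb2 A hA d1 dm l gl.
by exists d1', dm', l'; split => //; [lia | exact: osim_trans hs2 hs'].
Qed.

End NF.

Section Gauge.
Variable R : realType.
Variable n : nat.

Definition special (u w : 'I_n) :=
  ((val u == 0%N) && (val w == 1%N)) || ((val u == 1%N) && (val w == 0%N)).

Lemma pow_p m (u w : 'I_n) : sig_pow (@iota_p R n) m u w = 1%:M.
Proof.
elim: m => [|m IH] //=; rewrite /sig_dsum IH /iota_p -scalar_mx_block //.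
Qed.

Lemma pow_m_ns m (u w : 'I_n) : ~~ special u w -> sig_pow (@iota_m R n) m u w = 1%:M.
Proof.
move=> hs; elim: m => [|m IH] //=; rewrite /sig_dsum IH /iota_m.
by move: hs; rewrite /special => /negbTE ->; rewrite -scalar_mx_block.
Qed.

Lemma pow_m_s m (u w : 'I_n) : special u w -> sig_pow (@iota_m R n) m u w = (-1)%:M.
Proof.
move=> hs; elim: m => [|m IH] /=; first by apply/matrixP => i; case: i.
by rewrite /sig_dsum IH /iota_m; move: hs; rewrite /special => ->; rewrite -scalar_mx_block.
Qed.

Lemma rots_ns (l : seq R) (u w : 'I_n) : ~~ special u w -> sig_rots (n:=n) l u w = 1%:M.
Proof.
move=> hs; elim: l => [|th l IH] //=; rewrite /sig_dsum IH /sig_rot.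
move: hs; rewrite /special negb_or => /andP [/negbTE -> /negbTE ->].
by rewrite -scalar_mx_block.
Qed.

Lemma rots01 (l : seq R) (u w : 'I_n) : val u = 0%N -> val w = 1%N ->
  sig_rots (n:=n) l u w = RM l.
Proof.
move=> hu hw; elim: l => [|th l IH] //=; rewrite /sig_dsum IH /sig_rot hu hw //.
Qed.

Lemma rots10 (l : seq R) (u w : 'I_n) : val u = 1%N -> val w = 0%N ->
  sig_rots (n:=n) l u w = (RM l)^T.
Proof.
move=> hu hw; elim: l => [|th l IH] /=; first by rewrite trmx1.
rewrite /sig_dsum IH /sig_rot hu hw /=.
by rewrite (@tr_block_mx _ 2 (size l * 2) 2 (size l * 2)) !trmx0.
Qed.


End Gauge.

Fixpoint gpath (R : realType) d (E : nat -> 'M[R]_d) (k : nat) : 'M[R]_d :=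
  match k with 0 => 1%:M | k'.+1 => gpath E k' *m E k'.+1 end.

Unset Implicit Arguments.

Theorem proposition2p11 (R : realType) (n d : nat) (hn : (3 <= n)%N)
  (sigma : sig R n d) (hsigma : is_signature sigma) :
  exists (d1 dm : nat) (l : seq R),
    (forall th, th \in l -> (0 < th < pi) || (pi < th < 2 * pi)) /\
    exists e : (d1 + dm + size l * 2 = d)%N,
      sig_equiv sigma (sig_cast e (@sig_normal_form R n d1 dm l)).
Proof.
case: n hn sigma hsigma => [//|n] hn sigma hsigma.
have n0 : (0 < n.+1)%N by lia.
have n1 : (1 < n.+1)%N by lia.
pose I0 : 'I_n.+1 := Ordinal n0.
pose I1 : 'I_n.+1 := Ordinal n1.
pose E k := sigma (inord k) (inord (k.+1 %% n.+1)).
pose g := gpath E.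
have hE : forall k, (k < n.+1)%N -> E k *m (E k)^T = 1%:M /\
    sigma (inord (k.+1 %% n.+1)) (inord k) = (E k)^T.
  move=> k kn; apply: hsigma; rewrite /cyc_edge /= !inordK ?eqxx //.
  by rewrite ltn_mod.
have hg : forall k, (k < n.+1)%N -> g k *m (g k)^T = 1%:M.
  elim=> [|k IH] kn /=; first by rewrite trmx1 mulmx1.
  rewrite trmx_mul mulmxA -(mulmxA (g k)) (hE k.+1 kn).1 mulmx1 IH //; lia.
have e01 : cyc_edge I0 I1 by rewrite /cyc_edge /= modn_small.
have [hs01 hs10] := hsigma I0 I1 e01.
pose H := g n *m sigma I0 I1.
have hH : H *m H^T = 1%:M.
  rewrite /H trmx_mul mulmxA -(mulmxA (g n)) hs01 mulmx1 hg //; lia.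
have [d1 [dm [l [gl hsz [P [hP [hP' hPH]]]]]]] := core hH.
exists d1, dm, l; split => //.
subst d; exists erefl.
set N := NFm d1 dm l.
set S := sig_normal_form d1 dm l.
pose f (v : 'I_n.+1) := P *m g ((val v + n) %% n.+1)%N.
have hg' : forall k, (k < n.+1)%N -> (g k)^T *m g k = 1%:M.
  by move=> k kn; apply: mulmx1C; apply: hg.
have hN : N = P *m H *m P^T by rewrite hPH -mulmxA hP mulmx1.
have edge : forall u w : 'I_n.+1, val w = ((val u).+1 %% n.+1)%N ->
    f u *m sigma u w = S u w *m f w /\ f w *m sigma w u = S w u *m f u.
  move=> u w hw.
  have [u0|un0] := eqVneq (val u) 0%N.
    have w1 : val w = 1%N by rewrite hw u0 modn_small.
    have -> : u = I0 by apply: val_inj.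
    have -> : w = I1 by apply: val_inj.
    have fI0 : f I0 = P *m g n by rewrite /f /= add0n modn_small.
    have fI1 : f I1 = P by rewrite /f /= add1n modnn /= mulmx1.
    have S01 : S I0 I1 = N.
      by rewrite /S /sig_normal_form /sig_dsum pow_p pow_m_s ?rots01.
    have S10 : S I1 I0 = N^T.
      rewrite /S /sig_normal_form /sig_dsum pow_p pow_m_s ?rots10 //.
      by rewrite /N /NFm !tr_block_mx !trmx0 trmx1 tr_scalar_mx.
    rewrite fI0 fI1 S01 S10; split.
      by rewrite -mulmxA -hPH.
    rewrite hN !trmx_mul !trmxK -!mulmxA (mulmxA P^T) hP' mul1mx.
    by rewrite hg' // mulmx1 hs10.
  have kn : (val u < n.+1)%N := ltn_ord u.
  have u0' : (0 < val u)%N by rewrite lt0n.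
  have hw2 : val u = 1%N -> val w = 2%N by move=> h; rewrite hw h modn_small.
  have nsuw : ~~ special u w.
    rewrite /special (negbTE un0) /=; apply/negP => /andP [/eqP h /eqP].
    by rewrite hw2.
  have nswu : ~~ special w u.
    rewrite /special (negbTE un0) andbF orbF; apply/negP => /andP [/eqP h /eqP].
    by move/hw2; rewrite h.
  have Suw : S u w = 1%:M.
    by rewrite /S /sig_normal_form /sig_dsum pow_p pow_m_ns ?rots_ns // -!scalar_mx_block.
  have Swu : S w u = 1%:M.
    by rewrite /S /sig_normal_form /sig_dsum pow_p pow_m_ns ?rots_ns // -!scalar_mx_block.
  have fu : f u = P *m g (val u).-1.
    rewrite /f; congr (_ *m g _).
    rewrite -{1}(prednK u0') addSn -addnS modnDr modn_small //.
    by rewrite ltnS (leq_trans (leq_pred _)) // -ltnS.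
  have fw : f w = P *m g (val u).
    rewrite /f hw modnDml addSn -addnS modnDr modn_small //.
  have gk : g (val u) = g (val u).-1 *m sigma u w.
    rewrite /g -[in LHS](prednK u0') /= prednK //.
    by rewrite /E inord_val; congr (_ *m sigma _ _); apply: val_inj; rewrite /= inordK ?hw // ltn_mod.
  have [huw hwu] : sigma u w *m (sigma u w)^T = 1%:M /\ sigma w u = (sigma u w)^T.
    by apply: hsigma; rewrite /cyc_edge hw eqxx.
  rewrite Suw Swu !mul1mx fu fw gk; split; first by rewrite mulmxA.
  by rewrite hwu -!mulmxA huw mulmx1.
exists f; split.
  move=> v; rewrite /Defs.orthogonal /f trmx_mul mulmxA -(mulmxA P) hg ?mulmx1 //.
  by rewrite ltn_mod.
move=> i j hij; rewrite /sig_cast castmx_id -/S.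
case/orP: hij => /eqP h; first exact: (edge i j h).1.
exact: (edge j i h).2.
Qed.
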